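(* All eigenvalues of the linear operator $H(\pi)$ on $\mathbb V$ (equivalently, of the $C\times C$ tridiagonal matrix with diagonal entries $-\nu_i$, subdiagonal entries $(i+1,i)\mapsto\gamma_i$ and superdiagonal entries $(i,i+1)\mapsto i$, where $\gamma_i=\sigma d\,\pi_i^{d-1}$, $\nu_i=\gamma_i+i$) are real and strictly less than $-1$.
   Context: Fix integers $C\ge1$, $d\ge1$ and a real $\sigma>0$. $\mathbb V=\{v\in\mathbb R^{C+1}:v_0=0\}$, identified with $\mathbb R^C$ via coordinates $1,\dots,C$. $\pi\in\mathbb R^{C+1}$ is the unique vector with $1=\pi_0\ge\pi_1\ge\cdots\ge\pi_C\ge0$ satisfying $\sigma(\pi_{n-1}^d-\pi_n^d)=n(\pi_n-\pi_{n+1})$ for $1\le n\le C$, $\pi_{C+1}=0$. $H(\pi)$ is the linear map $(H(\pi)b)_n=\sigma d\,\pi_{n-1}^{d-1}b_{n-1}-(\sigma d\,\pi_n^{d-1}+n)b_n+nb_{n+1}$ for $1\le n\le C$ (with $b_0=b_{C+1}:=0$). *)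

(* Defs.v *)
From HB Require Import structures.
From mathcomp Require Import all_boot all_order all_algebra.
From mathcomp Require Import reals.
From mathcomp Require Import complex.
Set Implicit Arguments. Unset Strict Implicit. Unset Printing Implicit Defensive.
Import Order.TTheory GRing.Theory Num.Theory.
Local Open Scope ring_scope.

(* Row/column index i : 'I_C (0-based) stands
   for coordinate n = i+1 (1 <= n <= C).  Column-vector convention:
   (H b)_n = sigma d pi_{n-1}^{d-1} b_{n-1} - (sigma d pi_n^{d-1} + n) b_n + n b_{n+1},
   so H(n, n-1) = sigma d pi_{n-1}^{d-1}, H(n,n) = -(sigma d pi_n^{d-1} + n),
   H(n, n+1) = n, other entries 0 (b_0 = b_{C+1} = 0 is automatic). *)
Definition Hmat (R : realType) (C d : nat) (sigma : R) (pi : nat -> R) : 'M[R]_C :=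
  \matrix_(i < C, j < C)
    (let n := i.+1 in let m := j.+1 in
     if m == n.-1 then sigma * d%:R * pi m ^+ d.-1
     else if m == n then - (sigma * d%:R * pi n ^+ d.-1 + n%:R)
     else if m == n.+1 then n%:R
     else 0).

Definition is_pi (R : realType) (C d : nat) (sigma : R) (pi : nat -> R) : Prop :=
  [/\ pi 0%N = 1,
      (forall n : nat, (n < C)%N -> pi n.+1 <= pi n),
      0 <= pi C,
      pi C.+1 = 0 &
      (forall n : nat, (1 <= n <= C)%N ->
         sigma * (pi n.-1 ^+ d - pi n ^+ d) = n%:R * (pi n - pi n.+1))].

(* Main.v *)
Require Import Defs.
From HB Require Import structures.
From mathcomp Require Import all_boot all_order all_algebra.
From mathcomp Require Import reals complex.
From mathcomp Require Import ring lra zify.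
Import Order.TTheory GRing.Theory Num.Theory.
Local Open Scope ring_scope.
Local Open Scope complex_scope.

Section S1.
Variable R : realType.
Lemma ReMr (w : R[i]) (r : R) : complex.Re (w * r%:C) = complex.Re w * r.
Proof. case: w => a b /=. ring. Qed.
Lemma ImMr (w : R[i]) (r : R) : complex.Im (w * r%:C) = complex.Im w * r.
Proof. case: w => a b /=. ring. Qed.
Lemma ReM (w z : R[i]) : complex.Re (z * w) = complex.Re z * complex.Re w - complex.Im z * complex.Im w.
Proof. case: w => a b; case: z => c d /=. ring. Qed.
Lemma ImM (w z : R[i]) : complex.Im (z * w) = complex.Re z * complex.Im w + complex.Im z * complex.Re w.
Proof. case: w => a b; case: z => c d /=. ring. Qed.
Lemma ReD (w z : R[i]) : complex.Re (z + w) = complex.Re z + complex.Re w.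
Proof. case: w => a b; case: z => c d /=. ring. Qed.
Lemma ImD (w z : R[i]) : complex.Im (z + w) = complex.Im z + complex.Im w.
Proof. case: w => a b; case: z => c d /=. ring. Qed.
End S1.

Section S2.
Variable R : realType.
Definition receq (C : nat) (g : nat -> R) (p : R) (y : nat -> R) :=
  forall m, (1 <= m <= C)%N ->
    (m.-1)%:R * y m.-1 - (g m + m%:R) * y m + g m * y m.+1 = p * y m.

Lemma zero_prop (C : nat) (g : nat -> R) (p : R) (y : nat -> R) : (forall m, (1 <= m <= C)%N -> 0 < g m) ->
  y 0%N = 0 -> y 1%N = 0 -> receq C g p y ->
  forall m, (1 <= m <= C.+1)%N -> y m = 0 /\ y m.-1 = 0.
Proof.
move=> gpos y0 y1 E; elim=> [//|m IH] /andP[_ Hm].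
case: m IH Hm => [|m] IH Hm; first by rewrite y0 y1.
have [H1 H2] := IH (ltac:(by rewrite ltn0Sn ltnW)) .
split; last by [].
have Hm' : (1 <= m.+1 <= C)%N by rewrite ltn0Sn.
have := E _ Hm'; rewrite H1 H2 => /= H.
have : g m.+1 * y m.+2 = 0 by move: H; rewrite !mulr0; lra.
move/eqP; rewrite mulf_eq0 => /orP[/eqP g0|/eqP //].
by have := gpos _ Hm'; rewrite g0 ltxx.
Qed.

Lemma pos_contra (C : nat) (g : nat -> R) (p : R) (y : nat -> R) : (forall m, (1 <= m <= C)%N -> 0 < g m) -> -1 <= p ->
  y 0%N = 0 -> y C.+1 = 0 -> 0 < y 1%N -> receq C g p y -> False.
Proof.
move=> gpos hp y0 yC y1 E.
suff H : forall m, (1 <= m <= C.+1)%N -> 0 < y m /\ y m.-1 <= y m.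
  by have [] := H C.+1 (leqnn _); rewrite yC ltxx.
elim=> [//|m IH] /andP[_ Hm].
case: m IH Hm => [|m] IH Hm; first by rewrite y0 y1; split => //; apply: ltW.
have [H1 H2] := IH (ltac:(by rewrite ltn0Sn ltnW)) .
have Hm' : (1 <= m.+1 <= C)%N by rewrite ltn0Sn.
have := E _ Hm' => /= H.
have gp := gpos _ Hm'.
have Hn : (m.+1%:R : R) = m%:R + 1 by rewrite -natr1.
have Hn0 : (0 : R) <= m%:R by apply: ler0n.
rewrite Hn in H.
have h1 : 0 <= (p + 1) * y m.+1.
  apply: mulr_ge0; first lra. exact: ltW.
have h2 : 0 <= m%:R * (y m.+1 - y m) by apply: mulr_ge0; rewrite ?subr_ge0.
have e : g m.+1 * (y m.+2 - y m.+1) = p * y m.+1 + y m.+1 + m%:R * (y m.+1 - y m).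
  by rewrite -H /=; ring.
have h3 : 0 <= g m.+1 * (y m.+2 - y m.+1) by rewrite e; lra.
have : y m.+1 <= y m.+2 by rewrite -subr_ge0; move: h3; rewrite pmulr_rge0.
move=> hy; split; lra.
Qed.

Lemma bound_lemma (C : nat) (g : nat -> R) (p : R) (y : nat -> R) : (forall m, (1 <= m <= C)%N -> 0 < g m) -> -1 <= p ->
  y 0%N = 0 -> y C.+1 = 0 -> receq C g p y ->
  forall m, (1 <= m <= C)%N -> y m = 0.
Proof.
move=> gpos hp y0 yC E m Hm.
have [y1|y1] := eqVneq (y 1%N) 0.
  have Hm2 : (1 <= m <= C.+1)%N by case/andP: Hm => -> /= /leqW.
  by have [] := @zero_prop C g p y gpos y0 y1 E m Hm2.
exfalso; have [yn|yp|ye] := ltrgtP (y 1%N) 0; last by rewrite ye eqxx in y1.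
  apply: (@pos_contra C g p (fun n => - y n) gpos hp) => /=.
  - by rewrite y0 oppr0.
  - by rewrite yC oppr0.
  - by rewrite oppr_gt0.
  move=> k Hk; have := E k Hk => /= H; rewrite !mulrN -H; ring.
exact: (@pos_contra C g p y gpos hp y0 yC yp E).
Qed.
End S2.

Section S3.
Variable R : realType.

Fixpoint cw (g : nat -> R) (m : nat) : R :=
  match m with
  | 0 => 1
  | S m' => match m' with 0 => 1 | S _ => cw g m' * g m' / m'%:R end
  end.

Lemma cw_rec (g : nat -> R) m : (0 < m)%N -> m%:R * cw g m.+1 = cw g m * g m.
Proof.
case: m => [//|m] _ /=; rewrite [cw g m.+1 * g m.+1 / _]mulrC mulrA mulfV ?mul1r //.
by rewrite pnatr_eq0.
Qed.

Lemma cw_pos (C : nat) (g : nat -> R) : (forall m, (1 <= m <= C)%N -> 0 < g m) ->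
  forall m, (m <= C.+1)%N -> 0 < cw g m.
Proof.
move=> gpos; elim=> [|m IH] Hm; first by rewrite /= ltr01.
case: m IH Hm => [|m] IH Hm; first by rewrite /= ltr01.
rewrite /=; apply: divr_gt0; last by rewrite ltr0n.
apply: mulr_gt0; first exact: IH (ltnW Hm).
by apply: gpos; rewrite ltn0Sn.
Qed.

Lemma sum_ge_term (F : nat -> R) k : (forall m, (1 <= m <= k)%N -> 0 <= F m) ->
  0 <= \sum_(1 <= m < k.+1) F m /\
  (forall m0, (1 <= m0 <= k)%N -> F m0 <= \sum_(1 <= m < k.+1) F m).
Proof.
elim: k => [|k IH] HF.
  by rewrite big_geq //; split => // m0; rewrite leqn0 => /andP[] /[swap] /eqP ->.
have [IH1 IH2] : 0 <= \sum_(1 <= m < k.+1) F m /\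
  (forall m0, (1 <= m0 <= k)%N -> F m0 <= \sum_(1 <= m < k.+1) F m).
  by apply: IH => m /andP[h1 h2]; apply: HF; rewrite h1 ltnW.
have Fk : 0 <= F k.+1 by apply: HF; rewrite ltn0Sn leqnn.
rewrite big_nat_recr //=; split; first lra.
move=> m0 /andP[h1 h2]; case: (ltngtP m0 k.+1) h2 => // [lt _ | -> _]; last lra.
have := IH2 m0; rewrite h1 -ltnS lt => /(_ isT); lra.
Qed.

Lemma real_lemma (C : nat) (g : nat -> R) (p q : R) (a b : nat -> R) :
  (forall m, (1 <= m <= C)%N -> 0 < g m) ->
  a 0%N = 0 -> b 0%N = 0 -> a C.+1 = 0 -> b C.+1 = 0 ->
  (forall m, (1 <= m <= C)%N ->
    (m.-1)%:R * a m.-1 - (g m + m%:R) * a m + g m * a m.+1 = p * a m - q * b m) ->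
  (forall m, (1 <= m <= C)%N ->
    (m.-1)%:R * b m.-1 - (g m + m%:R) * b m + g m * b m.+1 = p * b m + q * a m) ->
  q = 0 \/ (forall m, (1 <= m <= C)%N -> a m = 0 /\ b m = 0).
Proof.
move=> gpos a0 b0 aC bC ea eb.
pose E k := k%:R * cw g k.+1 * (a k * b k.+1 - a k.+1 * b k).
pose F m := cw g m * (a m ^+ 2 + b m ^+ 2).
have step : forall m, (1 <= m <= C)%N -> q * F m = E m - E m.-1.
  move=> m Hm; have Ha := ea m Hm; have Hb := eb m Hm.
  case: m Hm Ha Hb => [//|k] Hm /= Ha Hb.
  rewrite /E /F cw_rec //.
  rewrite -natr1 in Ha Hb *.
  apply/eqP; rewrite -subr_eq0; apply/eqP.
  transitivity (cw g k.+1 * (b k.+1 * ((k%:R * a k - (g k.+1 + (k%:R + 1)) * a k.+1 + g k.+1 * a k.+2) - (p * a k.+1 - q * b k.+1))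
     - a k.+1 * ((k%:R * b k - (g k.+1 + (k%:R + 1)) * b k.+1 + g k.+1 * b k.+2) - (p * b k.+1 + q * a k.+1)))).
    ring.
  by rewrite Ha Hb !subrr !mulr0 subrr mulr0.
have sumE : forall k, (k <= C)%N -> \sum_(1 <= m < k.+1) q * F m = E k.
  elim=> [|k IH] Hk; first by rewrite big_geq // /E mul0r mul0r.
  rewrite big_nat_recr //= IH ?(ltnW Hk) // step ?ltn0Sn //=; ring.
have EC : E C = 0 by rewrite /E aC bC; ring.
have [->|qn0] := eqVneq q 0; [by left | right].
have Fge : forall m, (1 <= m <= C)%N -> 0 <= F m.
  move=> m Hm; apply: mulr_ge0; last by apply: addr_ge0; apply: sqr_ge0.
  by apply: ltW; apply: (@cw_pos C g gpos); case/andP: Hm => _ /leqW.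
have S0 : \sum_(1 <= m < C.+1) F m = 0.
  have := sumE C (leqnn C); rewrite EC -big_distrr /= => /eqP.
  by rewrite mulf_eq0 (negbTE qn0) /= => /eqP.
move=> m Hm.
have [_ H2] := @sum_ge_term F C Fge.
have := H2 m Hm; rewrite S0 => HF.
have cp : 0 < cw g m by apply: (@cw_pos C g gpos); case/andP: Hm => _ /leqW.
have : a m ^+ 2 + b m ^+ 2 <= 0.
  by move: HF; rewrite /F pmulr_rle0.
move=> h; split; nra.
Qed.
End S3.

Lemma entry (R : realType) (sigma : R) (d : nat) (pi : nat -> R) (i j : nat) (w : R[i]) :
 w * (if j.+1 == i.+1.-1 then sigma * d%:R * pi j.+1 ^+ d.-1
      else if j.+1 == i.+1 then -(sigma * d%:R * pi i.+1 ^+ d.-1 + i.+1%:R)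
      else if j.+1 == i.+2 then i.+1%:R else 0)%:C
 = (if i == j.+1 then w * (sigma * d%:R * pi j.+1 ^+ d.-1)%:C else 0)
 + (if i == j then w * (-(sigma * d%:R * pi j.+1 ^+ d.-1 + j.+1%:R))%:C else 0)
 + (if i == j.-1 then w * (j%:R)%:C else 0).
Proof.
repeat (case: eqP => ?); simpl; try lia.
- by rewrite !addr0.
- have -> : i = 0%N by lia. have -> : j = 0%N by lia.
  by rewrite add0r mulr0n raddf0 mulr0 addr0.
- have -> : i = j by lia. by rewrite add0r addr0.
- have -> : j = i.+1 by lia. by rewrite !add0r.
- by rewrite raddf0 mulr0 !addr0.
Qed.

Lemma pi_pos (R : realType) (C d : nat) (sigma : R) (pi : nat -> R) :
  (1 <= d)%N -> 0 < sigma -> is_pi C d sigma pi -> forall m, (m <= C)%N -> 0 < pi m.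
Proof.
move=> d1 sp [p0 pmon pC pC1 peq].
have nn : forall k, (k <= C)%N -> 0 <= pi k.
  have H : forall j, (j <= C)%N -> 0 <= pi (C - j)%N.
    elim=> [|j IH] Hj; first by rewrite subn0.
    have := pmon (C - j.+1)%N; rewrite subnSK // => /(_ ltac:(lia)) h.
    by apply: le_trans h; apply: IH; apply: ltnW.
  by move=> k Hk; rewrite -(subKn Hk); apply: H; apply: leq_subr.
have stepz : forall n, (1 <= n <= C)%N -> pi n = 0 -> pi n.-1 = 0.
  move=> n Hn pn; have := peq n Hn; rewrite pn expr0n.
  case: d d1 peq => [//|d'] _ _ /=.
  have h1 : 0 <= pi n.+1.
    case/andP: Hn => _; rewrite leq_eqVlt => /orP[/eqP ->|h]; first by rewrite pC1.
    exact: nn.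
  have h2 : 0 <= pi n.-1 by apply: nn; lia.
  have h3 : 0 <= pi n.-1 ^+ d'.+1 by apply: exprn_ge0.
  rewrite subr0 sub0r => e.
  have h4 : sigma * pi n.-1 ^+ d'.+1 <= 0.
    by rewrite e mulrN oppr_le0; apply: mulr_ge0.
  have h5 : pi n.-1 ^+ d'.+1 = 0.
    apply/eqP; rewrite eq_le h3 andbT; move: h4; by rewrite pmulr_rle0.
  by move/eqP: h5; rewrite expf_eq0 /= => /eqP.
move=> m Hm; rewrite lt_def nn // andbT; apply/eqP => pm.
have H : forall j, (j <= m)%N -> pi (m - j)%N = 0.
  elim=> [|j IH] Hj; first by rewrite subn0.
  have -> : (m - j.+1 = (m - j).-1)%N by lia.
  apply: stepz; [lia | exact: IH (ltnW Hj)].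
by have := H m (leqnn m); rewrite subnn p0 => /eqP; rewrite oner_eq0.
Qed.

Lemma sum_ind (R : realType) (n k : nat) (F : nat -> R[i]) :
  \sum_(i < n) (if (i:nat) == k then F i else 0) = if (k < n)%N then F k else 0.
Proof.
elim: n => [|n IH]; first by rewrite big_ord0.
rewrite big_ord_recr /= IH.
case: (ltngtP k n) => h.
- by rewrite addr0 (ltn_trans h (ltnSn n)).
- by rewrite addr0 ltnNge h.
- by rewrite add0r h ltnSn.
Qed.

Theorem mainTheorem8 (R : realType) (C d : nat) (sigma : R) (pi : nat -> R) :
  (1 <= C)%N -> (1 <= d)%N -> 0 < sigma -> is_pi C d sigma pi ->
  forall z : R[i],
    eigenvalue (map_mx (fun x : R => x%:C) (Hmat C d sigma pi)) z ->
    complex.Im z = 0 /\ complex.Re z < -1.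
Proof.
move=> C1 d1 sp Hpi z /eigenvalueP [v Hv vn0].
have ppos := @pi_pos R C d sigma pi d1 sp Hpi.
pose g m := sigma * d%:R * pi m ^+ d.-1.
have gpos : forall m, (1 <= m <= C)%N -> 0 < g m.
  move=> m /andP[_ Hm]; rewrite /g; apply: mulr_gt0; last by apply: exprn_gt0; apply: ppos.
  by apply: mulr_gt0 => //; rewrite ltr0n.
case: C C1 Hpi ppos gpos v Hv vn0 => [//|C] _ Hpi ppos gpos v Hv vn0.
pose y n := if (0 < n <= C.+1)%N then v 0 (inord n.-1) else 0.
have yE : forall i : 'I_C.+1, y i.+1 = v 0 i.
  by move=> i; rewrite /y ltn0Sn ltn_ord /= inord_val.
have y0 : y 0%N = 0 by [].
have yC : y C.+2 = 0 by rewrite /y ltnn andbF.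
have col : forall m, (1 <= m <= C.+1)%N ->
  y m.+1 * (g m)%:C + y m * (- (g m + m%:R))%:C + y m.-1 * ((m.-1)%:R)%:C = z * y m.
  case=> [//|j] /andP[_ Hj].
  pose jo : 'I_C.+1 := Ordinal Hj.
  have := congr1 (fun M : 'M[R[i]]_(1, C.+1) => M 0 jo) Hv; rewrite !mxE.
  under eq_bigr do rewrite !mxE.
  rewrite (eq_bigr _ (fun (i : 'I_C.+1) _ => entry R sigma d pi i jo (v 0 i))).
  under eq_bigr => i _ do rewrite -!(yE i).
  rewrite -(yE jo) !big_split /=.
  rewrite (@sum_ind R _ _ (fun i => y i.+1 * (sigma * d%:R * pi j.+1 ^+ d.-1)%:C)).
  rewrite (@sum_ind R _ _ (fun i => y i.+1 * (- (sigma * d%:R * pi j.+1 ^+ d.-1 + j.+1%:R))%:C)).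
  rewrite (@sum_ind R _ _ (fun i => y i.+1 * (j%:R)%:C)).
  rewrite Hj (_ : (j.-1 < C.+1)%N = true); last by lia.
  move=> <-; rewrite /g.
  congr (_ + _ + _).
  - case: ltnP => // h; have -> : j = C by lia.
    by rewrite yC mul0r.
  - case: j {Hj jo} => [|j] /=; first by rewrite y0 !mulr0n raddf0 !mulr0.
    by [].
pose a n := complex.Re (y n).
pose b n := complex.Im (y n).
have ea : forall m, (1 <= m <= C.+1)%N ->
    (m.-1)%:R * a m.-1 - (g m + m%:R) * a m + g m * a m.+1
    = complex.Re z * a m - complex.Im z * b m.
  move=> m Hm; have := congr1 (@complex.Re R) (col m Hm).
  rewrite !ReD !ReMr ReM /a /b => H; rewrite -H; ring.
have eb : forall m, (1 <= m <= C.+1)%N ->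
    (m.-1)%:R * b m.-1 - (g m + m%:R) * b m + g m * b m.+1
    = complex.Re z * b m + complex.Im z * a m.
  move=> m Hm; have := congr1 (@complex.Im R) (col m Hm).
  rewrite !ImD !ImMr ImM /a /b => H; rewrite -H; ring.
have a0 : a 0%N = 0 by rewrite /a y0.
have b0 : b 0%N = 0 by rewrite /b y0.
have aC : a C.+2 = 0 by rewrite /a yC.
have bC : b C.+2 = 0 by rewrite /b yC.
have nz : ~ (forall m, (1 <= m <= C.+1)%N -> a m = 0 /\ b m = 0).
  move=> H.
  have [j Hj] : exists j : 'I_C.+1, v 0 j != 0.
    apply/existsP; apply: contraNT vn0 => /existsPn h.
    apply/eqP/matrixP => i k; rewrite (ord1 i) mxE.
    by apply/eqP; apply/negPn; exact: h k.
  have := H j.+1 (ltn_ord j); rewrite /a /b yE.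
  by move: Hj; case: (v 0 j) => x1 x2 Hj /= [e1 e2]; move: Hj; rewrite e1 e2 eqxx.
have [q0|allz] := @real_lemma R C.+1 g (complex.Re z) (complex.Im z) a b gpos a0 b0 aC bC ea eb;
  last by exfalso; apply: nz.
split => //.
rewrite ltNge; apply/negP => hp.
apply: nz => m Hm; split.
- apply: (@bound_lemma R C.+1 g (complex.Re z) a gpos hp a0 aC _ m Hm).
  by move=> k Hk; rewrite (ea k Hk) q0 mul0r subr0.
- apply: (@bound_lemma R C.+1 g (complex.Re z) b gpos hp b0 bC _ m Hm).
  by move=> k Hk; rewrite (eb k Hk) q0 mul0r addr0.
Qed.
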